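(* Let $f:\mathbb{P}^N\to\mathbb{P}^N$ be a linear map (an automorphism of $\mathbb{P}^N$ given by an invertible $(N+1)\times(N+1)$ matrix) defined over $\bar{\mathbb{Q}}$, and assume that there is at least one point of $\mathbb{P}^N$ whose $f$-orbit is Zariski dense. Then the set $(\mathbb{P}^N)_f^{\mathrm{dense}}$ contains a non-empty Zariski open subset of $\mathbb{P}^N$.
   Context: For a point $P$, $\mathcal{O}_f(P)=\{f^n(P):n\ge 0\}$ is its forward $f$-orbit, and $(\mathbb{P}^N)_f^{\mathrm{dense}}$ denotes the set of points $P\in\mathbb{P}^N$ whose orbit $\mathcal{O}_f(P)$ is Zariski dense in $\mathbb{P}^N$. *)

(* Defs.v *)
(* algC (the algebraic numbers = Qbar), multinomials mpoly. *)
From HB Require Import structures.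
From mathcomp Require Import all_boot all_order all_algebra all_field.
From mathcomp Require Import mpoly.
Set Implicit Arguments. Unset Strict Implicit. Unset Printing Implicit Defensive.
Import GRing.Theory.
Local Open Scope ring_scope.

(* Homogeneous coordinates: a point of P^N(Qbar) is represented by a nonzero
   column vector x : 'cV[algC]_(N.+1); two vectors represent the same point iff
   they are proportional.  All predicates below are invariant under scaling. *)

Definition evalv (N : nat) (p : {mpoly algC[N.+1]}) (x : 'cV[algC]_(N.+1)) : algC :=
  p.@[fun i => x i 0].

Definition homogeneous (N : nat) (p : {mpoly algC[N.+1]}) : Prop :=
  exists d : nat, p \is ishomog1 d mdeg.

Definition homog_family (N : nat) (S : {mpoly algC[N.+1]} -> Prop) : Prop :=
  forall p, S p -> homogeneous p.

Definition zero_locus (N : nat) (S : {mpoly algC[N.+1]} -> Prop)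
  (x : 'cV[algC]_(N.+1)) : Prop :=
  x != 0 /\ forall p, S p -> evalv p x = 0.

Definition zariski_closed (N : nat) (Z : 'cV[algC]_(N.+1) -> Prop) : Prop :=
  exists S, homog_family S /\ forall x, Z x <-> zero_locus S x.

Definition zariski_open (N : nat) (U : 'cV[algC]_(N.+1) -> Prop) : Prop :=
  zariski_closed (fun x => x != 0 /\ ~ U x) /\ forall x, U x -> x != 0.

Definition zariski_dense (N : nat) (A : 'cV[algC]_(N.+1) -> Prop) : Prop :=
  forall Z, zariski_closed Z -> (forall x, A x -> Z x) -> forall x, x != 0 -> Z x.

Definition orbit (N : nat) (M : 'M[algC]_(N.+1)) (x : 'cV[algC]_(N.+1))
  : 'cV[algC]_(N.+1) -> Prop :=
  fun y => exists n : nat, y = (M ^+ n) *m x.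

Definition dense_orbit_points (N : nat) (M : 'M[algC]_(N.+1))
  : 'cV[algC]_(N.+1) -> Prop :=
  fun x => x != 0 /\ zariski_dense (orbit M x).

(* Main.v *)
Require Import Defs.
From HB Require Import structures.
From mathcomp Require Import all_boot all_order all_algebra all_field.
From mathcomp Require Import mpoly.
Set Implicit Arguments. Unset Strict Implicit. Unset Printing Implicit Defensive.
Import GRing.Theory.
Local Open Scope ring_scope.

Section S.
Variable N : nat.
Local Notation MP := {mpoly algC[N.+1]}.

Lemma prod_homog n' (F : 'I_n' -> MP) (D : 'I_n' -> nat) :
  (forall i, F i \is (D i).-homog) -> \prod_i F i \is (\sum_i D i)%N.-homog.
Proof.
move=> H; apply: (big_rec2 (fun p d => p \is d.-homog)); first exact: dhomog1.
by move=> i p d _ hp; apply: dhomogM.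
Qed.

Definition linp (w : 'rV[algC]_(N.+1)) : MP := \sum_k w 0 k *: 'X_k.

Lemma linp_homog w : linp w \is 1.-homog.
Proof.
apply: rpred_sum => k _; apply: rpredZ; rewrite dhomogX; apply/eqP; exact: mdeg1.
Qed.

Lemma linp_eval w x : evalv (linp w) x = (w *m x) 0 0.
Proof.
rewrite /evalv /linp raddf_sum mxE; apply: eq_bigr => k _.
by rewrite /= mevalZ mevalXU.
Qed.

Lemma comp_homog d (p : MP) (lq : (N.+1).-tuple MP) :
  p \is d.-homog -> (forall i, tnth lq i \is 1.-homog) -> p \mPo lq \is d.-homog.
Proof.
move=> hp hq; rewrite comp_mpolyE big_seq; apply: rpred_sum => m ms; apply: rpredZ.
rewrite -(dhomog_mf hp ms) /= mdegE.
apply: prod_homog => i; have := dhomogMn (m i) (hq i); by rewrite mul1n.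
Qed.

Definition gtup (g : 'M[algC]_(N.+1)) : (N.+1).-tuple MP :=
  [tuple linp (row i g) | i < N.+1].

Lemma comp_eval g (p : MP) x : evalv (p \mPo gtup g) x = evalv p (g *m x).
Proof.
rewrite /evalv comp_mpoly_meval; apply: meval_eq => i.
by rewrite tnth_mktuple -/(evalv _ x) linp_eval -row_mul mxE.
Qed.

Definition Kr (M : 'M[algC]_(N.+1)) (x : 'cV[algC]_(N.+1)) : 'M[algC]_(N.+1) :=
  \matrix_(i, j) (M ^+ j *m x) i 0.

Definition Kp (M : 'M[algC]_(N.+1)) : 'M[MP]_(N.+1) :=
  \matrix_(i, j) linp (row i (M ^+ j)).

Lemma detKp_eval M x : evalv (\det (Kp M)) x = \det (Kr M x).
Proof.
rewrite /evalv -det_map_mx; congr (\det _); apply/matrixP => i j.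
rewrite !mxE; transitivity (evalv (linp (row i (M ^+ j))) x); first by []. rewrite linp_eval mxE; apply: eq_bigr => k _; by rewrite mxE.
Qed.

Lemma detKp_homog M : \det (Kp M) \is (N.+1).-homog.
Proof.
rewrite /determinant; apply: rpred_sum => s _; rewrite rpredMsign.
have H := @prod_homog N.+1 _ (fun _ => 1%N); rewrite sum_nat_const card_ord muln1 in H; apply: H => i.
rewrite mxE; exact: linp_homog.
Qed.

Lemma colKry M x j : col j (Kr M x) = M ^+ j *m x.
Proof. by apply/matrixP => i k; rewrite !mxE ord1. Qed.

End S.

Lemma pow_span N (M : 'M[algC]_(N.+1)) n :
  exists a : 'I_(N.+1) -> algC, M ^+ n = \sum_i a i *: M ^+ i.
Proof.
pose cp := char_poly M; pose r := 'X^n %% cp.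
exists (fun i => r`_i).
have cpM : horner_mx M cp = 0 := Cayley_Hamilton M.
have e : horner_mx M ('X^n) = horner_mx M r.
  by rewrite {1}(divp_eq ('X^n) cp) rmorphD rmorphM /= cpM mulr0 add0r.
rewrite rmorphXn /= horner_mx_X in e; rewrite e.
have sr : (size r <= N.+1)%N.
  have := ltn_modp ('X^n) cp; rewrite -/r size_char_poly monic_neq0 //.
  exact: char_poly_monic.
rewrite {1}(_ : r = \poly_(i < N.+1) r`_i); last first.
  apply/polyP => i; rewrite coef_poly; case: ltnP => // h.
  by rewrite nth_default // (leq_trans sr h).
rewrite poly_def rmorph_sum /=; apply: eq_bigr => i _.
by rewrite linearZ /= rmorphXn /= horner_mx_X.
Qed.

Lemma unit_mul_neq0 N (A : 'M[algC]_(N.+1)) (v : 'cV[algC]_(N.+1)) :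
  A \in unitmx -> v != 0 -> A *m v != 0.
Proof.
move=> uA vn; apply: contraNneq vn => h.
by rewrite -(mulKmx uA v) h mulmx0.
Qed.

Lemma unit_pow N (M : 'M[algC]_(N.+1)) n : M \in unitmx -> M ^+ n \in unitmx.
Proof. move=> uM; exact: (unitrX n uM). Qed.

Lemma sum_apply N m (M : 'M[algC]_(N.+1)) (a : 'I_(N.+1) -> algC) (A : 'M[algC]_(m, N.+1)) (v : 'cV[algC]_(N.+1)) :
  A *m ((\sum_i a i *: M ^+ i) *m v) = \sum_i a i *: (A *m (M ^+ i *m v)).
Proof.
rewrite mulmx_suml mulmx_sumr; apply: eq_bigr => i _.
by rewrite -scalemxAl -scalemxAr.
Qed.

Lemma colM N m (A : 'M[algC]_(m, N.+1)) (B : 'M[algC]_(N.+1)) j : col j (A *m B) = A *m col j B.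
Proof. by rewrite !colE mulmxA. Qed.

Lemma delta_neq0 N (k : 'I_(N.+1)) : (delta_mx k 0 : 'cV[algC]_(N.+1)) != 0.
Proof.
apply/eqP => /matrixP /(_ k 0); rewrite !mxE !eqxx /= => /eqP.
by rewrite oner_eq0.
Qed.

Theorem lemma4p2 (N : nat) (M : 'M[algC]_(N.+1)) :
  M \in unitmx ->
  (exists x, dense_orbit_points M x) ->
  exists U : 'cV[algC]_(N.+1) -> Prop,
    zariski_open U /\ (exists x, U x) /\
    (forall x, U x -> dense_orbit_points M x).
Proof.
move=> uM [x0 [x0n dx0]].
have orbn : forall (v : 'cV[algC]_(N.+1)) n, v != 0 -> M ^+ n *m v != 0.
  by move=> v n vn; apply: unit_mul_neq0 => //; apply: unit_pow.
have cyc : \det (Kr M x0) != 0.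
  apply/negP => /det0P [w wn wK].
  have hw : forall n, w *m (M ^+ n *m x0) = 0.
    move=> n; have [a ->] := pow_span M n.
    rewrite sum_apply big1 // => i _.
    by rewrite -colKry -colM wK col0 scaler0.
  have HZ := dx0 (zero_locus (fun p => p = linp w)).
  have : forall x, x != 0 -> zero_locus (fun p => p = linp w) x.
    apply: HZ.
      exists (fun p => p = linp w); split => // p ->; exists 1%N; exact: linp_homog.
    move=> y [n ->]; split; first exact: orbn.
    by move=> p ->; rewrite linp_eval hw mxE.
  move=> H; case/eqP: wn; apply/matrixP => i k; rewrite ord1 mxE.
  have [_ /(_ _ erefl)] := H _ (delta_neq0 k).
  by rewrite linp_eval -colE mxE.
pose P := \det (Kp M).
exists (fun y => y != 0 /\ evalv P y != 0); split; [|split].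
- split; last by move=> x [].
  exists (fun p => p = P); split.
    by move=> p ->; exists N.+1; exact: detKp_homog.
  move=> x; split.
    by move=> [xn hx]; split => // p ->; apply/eqP; apply/negPn/negP => h; by apply: hx.
  move=> [xn hx]; split => // -[_]; by rewrite (hx P erefl) eqxx.
- by exists x0; split => //; rewrite /P detKp_eval.
move=> y [yn hy]; split => //.
rewrite /P detKp_eval in hy.
pose g := Kr M y *m invmx (Kr M x0).
have uK0 : Kr M x0 \in unitmx by rewrite unitmxE unitfE.
have uKy : Kr M y \in unitmx by rewrite unitmxE unitfE.
have ug : g \in unitmx by rewrite unitmx_mul uKy unitmx_inv.
have hg : forall n, g *m (M ^+ n *m x0) = M ^+ n *m y.
  move=> n; have [a ->] := pow_span M n.
  rewrite sum_apply mulmx_suml; apply: eq_bigr => i _.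
  by rewrite -scalemxAl -!colKry -colM mulmxKV.
move=> Z [S [hS hZ]] hsub z zn.
pose S' q := exists p, S p /\ q = p \mPo gtup g.
have HZ := dx0 (zero_locus S').
have Hall : forall x, x != 0 -> zero_locus S' x.
  apply: HZ.
    exists S'; split => //.
    move=> q [p [Sp ->]]; have [d hd] := hS p Sp; exists d.
    by apply: comp_homog => // i; rewrite tnth_mktuple; exact: linp_homog.
  move=> x [n ->]; split; first exact: orbn.
  move=> q [p [Sp ->]]; rewrite comp_eval hg.
  have [_ ] := (hZ (M ^+ n *m y)).1 (hsub _ (ex_intro _ n erefl)).
  by apply.
apply/hZ; split => // p Sp.
have xn : invmx g *m z != 0 by apply: unit_mul_neq0 => //; rewrite unitmx_inv.
have [_ /(_ (p \mPo gtup g))] := Hall _ xn.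
by rewrite comp_eval mulKVmx //; apply; exists p.
Qed.
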